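(* Let $N$ be an even positive integer and set Planck's constant $h=2\pi\hbar=1/N$. Let $F=(E_x+X^{-1/2}O_x)(B+Y^{-1}T)S$ be the operator described in the context. Then for every $m\in\mathbb{Z}$, $XF\Phi_m=F\Phi_m$ and $YF\Phi_m=F\Phi_m$; that is, $F$ maps the space $\mathcal{H}_\hbar(0)$ of (generalized) joint eigenvectors of $X$ and $Y$ with eigenvalue $1$ into itself.
   Context: $\widehat x$ is multiplication by $x$, $\widehat p=(\hbar/i)d/dx$. For real $s$, $X^{s}=e^{is\widehat{x}/\hbar}$, $Y^{s}=e^{is\widehat{p}/\hbar}$ (for $h=1/N$, $X=U^N$, $Y=V^N$ with $U=e^{2\pi i\widehat x}$, $V=e^{2\pi i\widehat p}$). $S=\exp\!\big(-\tfrac{i\log 2}{2\hbar}(\widehat{x}\widehat{p}+\widehat{p}\widehat{x})\big)$. $E_x$, $O_x$ are multiplication by the indicators of $[0,1)+2\mathbb{Z}$, $[1,2)+2\mathbb{Z}$; $B$, $T$ are the spectral projections of $\widehat p$ onto $[0,1/2)+\mathbb{Z}$, $[1/2,1)+\mathbb{Z}$. $\Phi_m=\Phi_m^{(0,0)}=N^{-1/2}\sum_{k\in\mathbb{Z}}\delta\big(x-\tfrac{m}{N}-k\big)$ (periodic $\delta$-comb). *)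

(* Defs.v *)
From Stdlib Require Import Reals List ZArith.
From Stdlib Require Import Classical ClassicalEpsilon.
From Coquelicot Require Import Complex.
Open Scope R_scope.

(* All generalized vectors occurring here are discrete
   (Dirac-type) measures sum_a w(a) delta(x - a) on R; such a measure is
   represented by its weight function w : R -> C (w(a) = mass at a). *)
Definition gvec := R -> C.

Definition Cexpi (t : R) : C := (cos t, sin t).

Definition hbar (N : nat) : R := / (2 * PI * INR N).

Definition Xpow (N : nat) (s : R) (u : gvec) : gvec :=
  fun x => Cmult (Cexpi (s * x / hbar N)) (u x).

(* Y^s = exp(i s p / hbar) = exp(s d/dx): translation, (Y^s f)(x) = f(x+s);
   on weights of a discrete measure this is again w'(x) = w(x+s). *)
Definition Ypow (s : R) (u : gvec) : gvec := fun x => u (x + s).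

(* S = exp(-(i log 2 / (2 hbar)) (x p + p x)) acts on functions by
   (S f)(x) = 2^{-1/2} f(x/2).  On a discrete measure (delta(x/2 - a) =
   2 delta(x - 2a)) the weight transforms as w'(y) = 2^{1/2} w(y/2). *)
Definition Sop (u : gvec) : gvec := fun y => Cmult (RtoC (sqrt 2)) (u (y / 2)).

Definition mult_ind (A : R -> Prop) (u : gvec) : gvec :=
  fun x => if excluded_middle_informative (A x) then u x else RtoC 0.

Definition Eset (x : R) : Prop := exists k : Z, 2 * IZR k <= x < 2 * IZR k + 1.
Definition Oset (x : R) : Prop := exists k : Z, 2 * IZR k + 1 <= x < 2 * IZR k + 2.
Definition Ex (u : gvec) : gvec := mult_ind Eset u.
Definition Ox (u : gvec) : gvec := mult_ind Oset u.

Definition gadd (u v : gvec) : gvec := fun x => Cplus (u x) (v x).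

(* Spectral projections of p onto Sigma + Z, Sigma a subset of [0,1).
   Since Sigma + Z is 1-periodic, 1_{Sigma+Z}(p) is a function of
   V = e^{2 pi i p} = Y^{1/N} (translation by h = 1/N):
   on a generalized eigenvector u of V with eigenvalue e^{2 pi i theta},
   theta in [0,1) (i.e. spectrally p in theta + Z), the projection is u if
   theta in Sigma and 0 otherwise.  It is defined (by linearity) on finite
   sums of such eigenvectors. *)
Definition V_eigen (N : nat) (theta : R) (u : gvec) : Prop :=
  forall x, Ypow (/ INR N) u x = Cmult (Cexpi (2 * PI * theta)) (u x).

Definition sum_list (l : list (R * gvec)) (x : R) : C :=
  fold_right (fun p acc => Cplus (snd p x) acc) (RtoC 0) l.

Definition is_V_decomp (N : nat) (u : gvec) (l : list (R * gvec)) : Prop :=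
  NoDup (map fst l) /\
  Forall (fun p => 0 <= fst p < 1 /\ V_eigen N (fst p) (snd p)) l /\
  (forall x, u x = sum_list l x).

Definition filter_sum (Sigma : R -> Prop) (l : list (R * gvec)) (x : R) : C :=
  fold_right (fun p acc =>
    Cplus (if excluded_middle_informative (Sigma (fst p)) then snd p x else RtoC 0) acc)
    (RtoC 0) l.

(* spectral projection (zero outside its natural domain) *)
Definition spec_proj (N : nat) (Sigma : R -> Prop) (u : gvec) : gvec :=
  match excluded_middle_informative (exists l, is_V_decomp N u l) with
  | left H => filter_sum Sigma (proj1_sig (constructive_indefinite_description _ H))
  | right _ => fun _ => RtoC 0
  end.

Definition Bop (N : nat) : gvec -> gvec := spec_proj N (fun t => 0 <= t < 1/2).
Definition Top (N : nat) : gvec -> gvec := spec_proj N (fun t => 1/2 <= t < 1).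

Definition Fop (N : nat) (u : gvec) : gvec :=
  let v := Sop u in
  let w := gadd (Bop N v) (Ypow (-1) (Top N v)) in
  gadd (Ex w) (Xpow N (-1/2) (Ox w)).

Definition Phi (N : nat) (m : Z) : gvec :=
  fun x => if excluded_middle_informative (exists k : Z, x = IZR m / INR N + IZR k)
           then RtoC (/ sqrt (INR N)) else RtoC 0.

(* Main.v *)
Require Import Defs.
From Stdlib Require Import Reals ZArith Arith List Lra Lia FunctionalExtensionality Classical ClassicalEpsilon.
From Coquelicot Require Import Complex.
Open Scope R_scope.

Lemma Cexpi_add a b : Cexpi (a + b) = Cmult (Cexpi a) (Cexpi b).
Proof. unfold Cexpi, Cmult; simpl. rewrite cos_plus, sin_plus. f_equal; ring. Qed.

Lemma Cexpi_0 : Cexpi 0 = RtoC 1.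
Proof. unfold Cexpi; rewrite cos_0, sin_0; reflexivity. Qed.

Lemma Cexpi_2PIn (k : nat) : Cexpi (2 * PI * INR k) = RtoC 1.
Proof.
  unfold Cexpi. replace (2 * PI * INR k) with (0 + 2 * INR k * PI) by ring.
  rewrite cos_period, sin_period, cos_0, sin_0; reflexivity.
Qed.

Lemma Cexpi_2PIz (k : Z) : Cexpi (2 * PI * IZR k) = RtoC 1.
Proof.
  destruct (Z_le_gt_dec 0 k) as [H|H].
  - rewrite <- (Z2Nat.id k H), <- INR_IZR_INZ. apply Cexpi_2PIn.
  - replace k with (- Z.of_nat (Z.to_nat (- k)))%Z by lia.
    rewrite opp_IZR, <- INR_IZR_INZ.
    replace (2 * PI * - INR (Z.to_nat (- k))) with (- (2 * PI * INR (Z.to_nat (- k)))) by ring.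
    pose proof (Cexpi_2PIn (Z.to_nat (-k))) as E. unfold Cexpi in *.
    rewrite cos_neg, sin_neg. injection E as E1 E2. rewrite E1, E2.
    unfold RtoC; f_equal; ring.
Qed.

Lemma Cexpi_PI : Cexpi PI = Copp (RtoC 1).
Proof. unfold Cexpi; rewrite cos_PI, sin_PI. unfold Copp, RtoC; simpl; f_equal; ring. Qed.

Lemma Cexpi_mPI : Cexpi (- PI) = Copp (RtoC 1).
Proof. unfold Cexpi; rewrite cos_neg, sin_neg, cos_PI, sin_PI. unfold Copp, RtoC; simpl; f_equal; ring. Qed.

Lemma Cexpi_inv a : Cmult (Cexpi (- a)) (Cexpi a) = RtoC 1.
Proof. rewrite <- Cexpi_add. replace (-a + a) with 0 by ring. apply Cexpi_0. Qed.

Lemma Cexpi_inj a b : 0 <= a < 1 -> 0 <= b < 1 -> a <> b ->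
  Cexpi (2 * PI * a) <> Cexpi (2 * PI * b).
Proof.
  intros Ha Hb Hab E. unfold Cexpi in E. injection E as E1 E2.
  assert (Hs : sin (2 * PI * a - 2 * PI * b) = 0).
  { rewrite sin_minus, E1, E2. ring. }
  assert (Hc : cos (2 * PI * a - 2 * PI * b) = 1).
  { rewrite cos_minus, E1, E2. pose proof (sin2_cos2 (2*PI*b)). unfold Rsqr in H. lra. }
  destruct (sin_eq_0_0 _ Hs) as [k Hk].
  pose proof PI_RGT_0.
  assert (Hk1 : IZR k * PI < 2 * PI) by (rewrite <- Hk; nra).
  assert (Hk2 : -2 * PI < IZR k * PI) by (rewrite <- Hk; nra).
  assert (Hk3 : IZR k < 2) by nra.
  assert (Hk4 : -2 < IZR k) by nra.
  apply lt_IZR in Hk3. apply lt_IZR in Hk4.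
  assert (k = 0 \/ k = 1 \/ k = -1)%Z as [ -> | [ -> | -> ] ] by lia.
  - apply Hab. assert (2 * PI * (a - b) = 0) by (rewrite Rmult_0_l in Hk; lra).
    apply Rmult_integral in H0 as [H0|H0]; lra.
  - rewrite Hk in Hc. rewrite Rmult_1_l, cos_PI in Hc. lra.
  - rewrite Hk in Hc. replace (IZR (-1) * PI) with (- PI) in Hc by (simpl; ring).
    rewrite cos_neg, cos_PI in Hc. lra.
Qed.

Definition psum (g : R -> C) (l : list (R * gvec)) (x : R) : C :=
  fold_right (fun p acc => Cplus (Cmult (g (fst p)) (snd p x)) acc) (RtoC 0) l.

Lemma psum_cons g p l x : psum g (p :: l) x = Cplus (Cmult (g (fst p)) (snd p x)) (psum g l x).
Proof. reflexivity. Qed.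
Lemma psum_nil g x : psum g nil x = RtoC 0.
Proof. reflexivity. Qed.

Definition ev (t : R) : C := Cexpi (2 * PI * t).

Lemma psum_app g l1 l2 x : psum g (l1 ++ l2) x = Cplus (psum g l1 x) (psum g l2 x).
Proof. induction l1 as [|p l1 IH]; cbn [app map]; rewrite ?psum_cons, ?psum_nil. - ring. - rewrite IH. ring. Qed.

Lemma psum_ext g1 g2 l x :
  Forall (fun p : R * gvec => Cmult (g1 (fst p)) (snd p x) = Cmult (g2 (fst p)) (snd p x)) l ->
  psum g1 l x = psum g2 l x.
Proof. induction 1; cbn [app map]; rewrite ?psum_cons, ?psum_nil. reflexivity. rewrite IHForall. f_equal. exact H. Qed.

Lemma psum_plus g1 g2 l x :
  psum (fun t => Cplus (g1 t) (g2 t)) l x = Cplus (psum g1 l x) (psum g2 l x).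
Proof. induction l as [|p l IH]; cbn [app map]; rewrite ?psum_cons, ?psum_nil. ring. rewrite IH. ring. Qed.

Lemma psum_const c l x : psum (fun _ => c) l x = Cmult c (psum (fun _ => RtoC 1) l x).
Proof. induction l as [|p l IH]; cbn [app map]; rewrite ?psum_cons, ?psum_nil. ring. rewrite IH. ring. Qed.

Lemma psum_lin a b g1 g2 l x :
  psum (fun t => Cplus (Cmult a (g1 t)) (Cmult b (g2 t))) l x
  = Cplus (Cmult a (psum g1 l x)) (Cmult b (psum g2 l x)).
Proof. induction l as [|p l IH]; rewrite ?psum_cons, ?psum_nil. ring. rewrite IH. ring. Qed.

Lemma psum_scal c g l x :
  psum (fun t => Cmult c (g t)) l x = Cmult c (psum g l x).
Proof. induction l as [|p l IH]; rewrite ?psum_cons, ?psum_nil. ring. rewrite IH. ring. Qed.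

Lemma psum_zero g l x : Forall (fun p : R * gvec => snd p x = RtoC 0) l -> psum g l x = RtoC 0.
Proof. induction 1; cbn [app map]; rewrite ?psum_cons, ?psum_nil. reflexivity. rewrite H, IHForall. ring. Qed.

Lemma psum_shiftN N g l x :
  Forall (fun p : R * gvec => V_eigen N (fst p) (snd p)) l ->
  psum g l (x + / INR N) = psum (fun t => Cmult (g t) (ev t)) l x.
Proof.
  induction 1; cbn [app map]; rewrite ?psum_cons, ?psum_nil. reflexivity. rewrite IHForall.
  specialize (H x). unfold Ypow in H. rewrite H. unfold ev. ring.
Qed.

Definition scale_list (h : R -> C) (l : list (R * gvec)) : list (R * gvec) :=
  map (fun p : R * gvec => ((fst p, fun z => Cmult (h (fst p)) (snd p z)) : R * gvec)) l.

Lemma psum_map_scale (h : R -> C) g l x :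
  psum g (scale_list h l) x
  = psum (fun t => Cmult (g t) (h t)) l x.
Proof. unfold scale_list. induction l as [|p l IH]; cbn [app map]; rewrite ?psum_cons, ?psum_nil. reflexivity. rewrite IH. cbn [fst snd]. rewrite Cmult_assoc. reflexivity. Qed.

Lemma V_eigen_scale N t c u : V_eigen N t u -> V_eigen N t (fun z => Cmult c (u z)).
Proof. intros H x. specialize (H x). unfold Ypow in *. rewrite H. ring. Qed.

Lemma V_eigen_zero N t u : (forall x, u x = RtoC 0) -> V_eigen N t u.
Proof. intros H x. unfold Ypow. rewrite !H. ring. Qed.

Lemma indep N : forall vals, Forall (fun t => 0 <= t < 1) vals ->
  forall l, Forall (fun p : R * gvec => V_eigen N (fst p) (snd p) /\
                  (In (fst p) vals \/ forall x, snd p x = RtoC 0)) l ->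
  (forall x, psum (fun _ => RtoC 1) l x = RtoC 0) ->
  forall g x, psum g l x = RtoC 0.
Proof.
  induction vals as [|v vs IH]; intros Hv l Hl Hs g x.
  - apply psum_zero. eapply Forall_impl; [|exact Hl]. simpl.
    intros p [_ [[] | H]]. apply H.
  - inversion Hv as [|? ? Hv0 Hvs]; subst.
    set (h := fun t => if Req_EM_T t v then RtoC 0
                       else Cdiv (Cminus (g t) (g v)) (Cminus (ev t) (ev v))).
    set (l2 := scale_list (fun t => Cminus (ev t) (ev v)) l).
    assert (H2 : forall y, psum h l2 y = RtoC 0).
    { intro y. apply IH. exact Hvs.
      - unfold l2, scale_list. rewrite Forall_map. eapply Forall_impl; [|exact Hl]. simpl.
        intros [t u] [He [Hin|Hz]]; simpl in *; split.
        + apply V_eigen_scale, He.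
        + destruct Hin as [->|Hin]. right. intro. unfold Cminus. ring.
          left; exact Hin.
        + apply V_eigen_scale, He.
        + right. intro z. rewrite Hz. ring.
      - intro z. unfold l2. rewrite psum_map_scale.
        transitivity (Cminus (psum (fun _ => RtoC 1) l (z + / INR N))
                        (Cmult (ev v) (psum (fun _ => RtoC 1) l z))).
        + rewrite psum_shiftN by (eapply Forall_impl; [|exact Hl]; simpl; tauto).
          transitivity (psum (fun t => Cplus (Cmult (RtoC 1) (Cmult (RtoC 1) (ev t))) (Cmult (Copp (ev v)) (RtoC 1))) l z).
          { apply psum_ext. apply Forall_forall. intros; unfold Cminus; ring. }
          rewrite psum_lin. unfold Cminus. ring.
        + rewrite !Hs. ring. }
    unfold l2 in H2. setoid_rewrite psum_map_scale in H2.
    transitivity (psum (fun t => Cplus (g v) (Cmult (h t) (Cminus (ev t) (ev v)))) l x).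
    + apply psum_ext. eapply Forall_impl; [|exact Hl]. simpl.
      intros [t u] [He [Hin|Hz]]; cbn [fst snd] in *.
      * unfold h. destruct (Req_EM_T t v) as [->|Hne]. ring.
        assert (Hn : Cminus (ev t) (ev v) <> RtoC 0).
        { intro E. assert (Ht : 0 <= t < 1).
          { destruct Hin as [<-|Hin]; [exact Hv0|]. rewrite Forall_forall in Hvs. now apply Hvs. }
          apply (Cexpi_inj t v Ht Hv0 Hne).
          transitivity (Cplus (Cminus (ev t) (ev v)) (ev v)). unfold ev, Cminus; ring.
          rewrite E. unfold ev; ring. }
        field. exact Hn.
      * rewrite Hz. ring.
    + rewrite psum_plus, psum_const, Hs, H2. ring.
Qed.

Definition decomp_ok N (l : list (R * gvec)) :=
  Forall (fun p : R * gvec => 0 <= fst p < 1 /\ V_eigen N (fst p) (snd p)) l.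

Lemma uniq N l1 l2 : decomp_ok N l1 -> decomp_ok N l2 ->
  (forall x, psum (fun _ => RtoC 1) l1 x = psum (fun _ => RtoC 1) l2 x) ->
  forall g x, psum g l1 x = psum g l2 x.
Proof.
  intros H1 H2 Hs g x.
  set (L := l1 ++ scale_list (fun _ => Copp (RtoC 1)) l2).
  assert (HL : decomp_ok N L).
  { unfold L, decomp_ok in *. apply Forall_app; split; auto.
    unfold scale_list. rewrite Forall_map. eapply Forall_impl; [|exact H2]. simpl.
    intros p [? ?]; split; auto. apply V_eigen_scale; auto. }
  assert (forall y, psum g L y = RtoC 0).
  { intro y. apply (indep N (map fst L)).
    - rewrite Forall_map. eapply Forall_impl; [|exact HL]. simpl; tauto.
    - apply Forall_forall. intros p Hp. split.
      + unfold decomp_ok in HL. rewrite Forall_forall in HL. apply HL, Hp.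
      + left. apply in_map, Hp.
    - intro z. unfold L. rewrite psum_app, psum_map_scale, Hs.
      replace (psum (fun t => Cmult (RtoC 1) (Copp (RtoC 1))) l2 z)
        with (psum (fun t => Cmult (Copp (RtoC 1)) (RtoC 1)) l2 z)
        by (apply psum_ext, Forall_forall; intros; ring).
      rewrite psum_scal. ring. }
  specialize (H x). unfold L in H. rewrite psum_app, psum_map_scale in H.
  replace (psum (fun t => Cmult (g t) (Copp (RtoC 1))) l2 x)
    with (psum (fun t => Cmult (Copp (RtoC 1)) (g t)) l2 x) in H
    by (apply psum_ext, Forall_forall; intros; ring).
  rewrite psum_scal in H.
  transitivity (Cplus (Cplus (psum g l1 x) (Cmult (Copp (RtoC 1)) (psum g l2 x))) (psum g l2 x)).
  ring. rewrite H. ring.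
Qed.

Lemma Xpow_eq N s u x : Xpow N s u x = Cmult (Cexpi (2 * PI * INR N * s * x)) (u x).
Proof. unfold Xpow, hbar. f_equal. f_equal. unfold Rdiv. rewrite Rinv_inv. ring. Qed.

Lemma Cexpi_shift a k : Cexpi (a + 2 * PI * IZR k) = Cexpi a.
Proof. rewrite Cexpi_add, Cexpi_2PIz. ring. Qed.

Lemma EO_ex x : Eset x \/ Oset x.
Proof.
  destruct (base_Int_part (x / 2)) as [H1 H2]. set (k := Int_part (x / 2)) in *.
  destruct (Rlt_le_dec x (2 * IZR k + 1)).
  - left. exists k. lra.
  - right. exists k. lra.
Qed.

Lemma EO_excl x : Eset x -> Oset x -> False.
Proof.
  intros [k Hk] [j Hj].
  assert (IZR k < IZR j + 1) by lra. assert (IZR j < IZR k) by lra.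
  rewrite <- plus_IZR in H. apply lt_IZR in H. apply lt_IZR in H0. lia.
Qed.

Lemma E_shift x : Eset x -> Oset (x + 1).
Proof. intros [k Hk]. exists k. lra. Qed.
Lemma O_shift x : Oset x -> Eset (x + 1).
Proof. intros [k Hk]. exists (k + 1)%Z. rewrite plus_IZR. lra. Qed.

Lemma final N n (HN : N = (2 * n)%nat) (b t : gvec) :
  (forall z, Cmult (Cexpi (PI * INR N * z)) (t z) = b z) ->
  (forall z, b (z + 2) = b z) ->
  (forall z, Cmult (Cexpi (2 * PI * INR N * z)) (t z) = t z) ->
  Xpow N 1 (gadd (Ex (gadd b (Ypow (-1) t))) (Xpow N (-1/2) (Ox (gadd b (Ypow (-1) t)))))
  = gadd (Ex (gadd b (Ypow (-1) t))) (Xpow N (-1/2) (Ox (gadd b (Ypow (-1) t)))) /\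
  Ypow 1 (gadd (Ex (gadd b (Ypow (-1) t))) (Xpow N (-1/2) (Ox (gadd b (Ypow (-1) t)))))
  = gadd (Ex (gadd b (Ypow (-1) t))) (Xpow N (-1/2) (Ox (gadd b (Ypow (-1) t)))).
Proof.
  intros H2 H1 H3.
  assert (HNn : INR N = 2 * INR n) by (rewrite HN, mult_INR; reflexivity).
  split; apply functional_extensionality; intro x;
  set (E := Cexpi (PI * INR N * x)); set (Ei := Cexpi (- (PI * INR N * x)));
  set (T1 := t x); set (T2 := t (x + -1));
  assert (HE : Cmult Ei E = RtoC 1) by apply Cexpi_inv;
  assert (HT1 : Cmult (Cmult E E) T1 = T1)
    by (unfold E, T1; transitivity (Cmult (Cexpi (2*PI*INR N*x)) (t x));
        [f_equal; rewrite <- Cexpi_add; f_equal; ring | apply H3]);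
  assert (HEy : Cexpi (PI * INR N * (x + -1)) = E)
    by (unfold E; rewrite <- (Cexpi_shift (PI * INR N * x) (- Z.of_nat n)); f_equal;
        rewrite opp_IZR, <- INR_IZR_INZ, HNn; ring);
  assert (HT2 : Cmult (Cmult E E) T2 = T2)
    by (unfold T2; rewrite <- HEy; transitivity (Cmult (Cexpi (2*PI*INR N*(x + -1))) (t (x + -1)));
        [f_equal; rewrite <- Cexpi_add; f_equal; ring | apply H3]);
  assert (Hb1 : b x = Cmult E T1) by (rewrite <- H2; reflexivity);
  assert (Hb2 : b (x + 1) = Cmult E T2)
    by (replace (x + 1) with ((x + -1) + 2) by ring; rewrite H1, <- H2, HEy; reflexivity);
  unfold gadd, Ex, Ox, mult_ind, Ypow; rewrite ?Xpow_eq.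
  - replace (2 * PI * INR N * 1 * x) with (PI * INR N * x + PI * INR N * x) by ring.
    replace (2 * PI * INR N * (-1/2) * x) with (- (PI * INR N * x)) by field.
    rewrite Cexpi_add. fold E Ei T2. rewrite Hb1.
    pose proof (EO_excl x). pose proof (EO_ex x).
    destruct (excluded_middle_informative (Eset x));
    destruct (excluded_middle_informative (Oset x)); try tauto.
    + transitivity (Cplus (Cmult E (Cmult (Cmult E E) T1)) (Cmult (Cmult E E) T2)). ring.
      rewrite HT1, HT2. ring.
    + transitivity (Cmult Ei (Cplus (Cmult E (Cmult (Cmult E E) T1)) (Cmult (Cmult E E) T2))). ring.
      rewrite HT1, HT2. ring.
  - replace (2 * PI * INR N * (-1/2) * (x + 1)) with (- (PI * INR N * x) + 2 * PI * IZR (- Z.of_nat n))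
      by (rewrite opp_IZR, <- INR_IZR_INZ, HNn; field).
    rewrite Cexpi_shift.
    replace (2 * PI * INR N * (-1/2) * x) with (- (PI * INR N * x)) by field.
    replace (x + 1 + -1) with x by ring.
    fold E Ei T1 T2. rewrite Hb1, Hb2.
    assert (HA : Cmult Ei T1 = Cmult E T1).
    { transitivity (Cmult Ei (Cmult (Cmult E E) T1)). rewrite HT1; reflexivity.
      transitivity (Cmult (Cmult Ei E) (Cmult E T1)). ring. rewrite HE; ring. }
    assert (HB : Cmult Ei T2 = Cmult E T2).
    { transitivity (Cmult Ei (Cmult (Cmult E E) T2)). rewrite HT2; reflexivity.
      transitivity (Cmult (Cmult Ei E) (Cmult E T2)). ring. rewrite HE; ring. }
    pose proof (EO_excl x). pose proof (EO_excl (x+1)). pose proof (EO_ex x).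
    pose proof (E_shift x). pose proof (O_shift x).
    destruct (excluded_middle_informative (Eset x));
    destruct (excluded_middle_informative (Oset x));
    destruct (excluded_middle_informative (Eset (x+1)));
    destruct (excluded_middle_informative (Oset (x+1))); try tauto.
    + transitivity (Cplus (Cmult (Cmult Ei E) T2) (Cmult Ei T1)). ring.
      rewrite HE, HA. ring.
    + symmetry. transitivity (Cplus (Cmult (Cmult Ei E) T1) (Cmult Ei T2)). ring.
      rewrite HE, HB. ring.
Qed.

Definition ind (S : R -> Prop) (t : R) : C :=
  if excluded_middle_informative (S t) then RtoC 1 else RtoC 0.

Lemma sum_list_psum l x : sum_list l x = psum (fun _ => RtoC 1) l x.
Proof.
  induction l as [|p l IH]. reflexivity.
  rewrite psum_cons. unfold sum_list in *. simpl. rewrite IH. unfold gvec in *. ring.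
Qed.

Lemma filter_sum_psum S l x : filter_sum S l x = psum (ind S) l x.
Proof.
  induction l as [|p l IH]. reflexivity.
  rewrite psum_cons. unfold filter_sum in *. simpl. rewrite IH. unfold ind. unfold gvec in *.
  destruct (excluded_middle_informative (S (fst p))); ring.
Qed.

Definition tr_list (s : R -> R) (K : R -> C) (l : list (R * gvec)) : list (R * gvec) :=
  map (fun p : R * gvec => ((s (fst p), fun z => Cmult (K z) (snd p z)) : R * gvec)) l.

Lemma psum_tr s K g l x : psum g (tr_list s K l) x = Cmult (K x) (psum (fun t => g (s t)) l x).
Proof.
  unfold tr_list. induction l as [|p l IH]; cbn [map]; rewrite ?psum_cons, ?psum_nil.
  ring. rewrite IH. cbn [fst snd]. ring.
Qed.

Lemma tr_ok N s K l :
  (forall t, 0 <= t < 1 -> 0 <= s t < 1) ->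
  (forall t x, 0 <= t < 1 -> Cmult (K (x + / INR N)) (Cexpi (2 * PI * t)) = Cmult (Cexpi (2 * PI * s t)) (K x)) ->
  decomp_ok N l -> decomp_ok N (tr_list s K l).
Proof.
  intros Hs HK Hl. unfold decomp_ok, tr_list in *. rewrite Forall_map.
  eapply Forall_impl; [|exact Hl]. intros [t u] [Ht He]; cbn [fst snd] in *.
  split. now apply Hs. intro x. unfold Ypow. specialize (He x). unfold Ypow in He.
  rewrite He. transitivity (Cmult (Cmult (K (x + / INR N)) (Cexpi (2 * PI * t))) (u x)). ring.
  rewrite HK by exact Ht. ring.
Qed.

Definition shl_list (l : list (R * gvec)) : list (R * gvec) :=
  map (fun p : R * gvec => ((fst p, fun z => snd p (z + 2)) : R * gvec)) l.

Lemma psum_shl g l x : psum g (shl_list l) x = psum g l (x + 2).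
Proof.
  unfold shl_list. induction l as [|p l IH]; cbn [map]; rewrite ?psum_cons, ?psum_nil.
  reflexivity. rewrite IH. reflexivity.
Qed.

Lemma shl_ok N l : decomp_ok N l -> decomp_ok N (shl_list l).
Proof.
  intros Hl. unfold decomp_ok, shl_list in *. rewrite Forall_map.
  eapply Forall_impl; [|exact Hl]. intros [t u] [Ht He]; cbn [fst snd] in *.
  split. exact Ht. intro x. unfold Ypow. specialize (He (x + 2)). unfold Ypow in He.
  rewrite <- He. f_equal. ring.
Qed.

Definition sh (t : R) : R := if Rlt_dec t (1/2) then t + 1/2 else t - 1/2.

Lemma sh_range t : 0 <= t < 1 -> 0 <= sh t < 1.
Proof. unfold sh; destruct (Rlt_dec t (1/2)); lra. Qed.

Lemma ind_sh t : 0 <= t < 1 ->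
  ind (fun t => 0 <= t < 1/2) (sh t) = ind (fun t => 1/2 <= t < 1) t.
Proof.
  intro Ht. unfold ind, sh. destruct (Rlt_dec t (1/2));
  destruct (excluded_middle_informative _); destruct (excluded_middle_informative _);
  try reflexivity; exfalso; lra.
Qed.

Lemma ev_sh t : Cexpi (2 * PI * sh t) = Copp (Cexpi (2 * PI * t)).
Proof.
  unfold sh. destruct (Rlt_dec t (1/2)).
  - replace (2 * PI * (t + 1/2)) with (2 * PI * t + PI) by field.
    rewrite Cexpi_add, Cexpi_PI. ring.
  - replace (2 * PI * (t - 1/2)) with (2 * PI * t + - PI) by field.
    rewrite Cexpi_add, Cexpi_mPI. ring.
Qed.

Lemma v_facts N m (hN : (0 < N)%nat) :
  (forall z, Sop (Phi N m) (z + 2) = Sop (Phi N m) z) /\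
  (forall z, Cmult (Cexpi (PI * INR N * z)) (Sop (Phi N m) z) = Sop (Phi N m) z) /\
  (forall z, Cmult (Cexpi (2 * PI * INR N * z)) (Sop (Phi N m) z) = Sop (Phi N m) z).
Proof.
  assert (HN : INR N <> 0) by (apply not_0_INR; lia).
  assert (V3 : forall z, Cmult (Cexpi (PI * INR N * z)) (Sop (Phi N m) z) = Sop (Phi N m) z).
  { intro z. unfold Sop, Phi.
    destruct (excluded_middle_informative _) as [[k Hk]|Hn].
    - assert (Hz : z = 2 * (IZR m / INR N + IZR k)) by lra.
      replace (PI * INR N * z) with (2 * PI * IZR (m + k * Z.of_nat N)).
      + rewrite Cexpi_2PIz. ring.
      + rewrite Hz, plus_IZR, mult_IZR, <- INR_IZR_INZ. field. exact HN.
    - ring. }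
  split; [|split].
  - intro z. unfold Sop, Phi. replace ((z + 2) / 2) with (z / 2 + 1) by field.
    destruct (excluded_middle_informative (exists k : Z, z / 2 + 1 = IZR m / INR N + IZR k)) as [[k Hk]|Hn1];
    destruct (excluded_middle_informative (exists k : Z, z / 2 = IZR m / INR N + IZR k)) as [[j Hj]|Hn2];
    try reflexivity.
    + exfalso. apply Hn2. exists (k - 1)%Z. rewrite minus_IZR. lra.
    + exfalso. apply Hn1. exists (j + 1)%Z. rewrite plus_IZR. lra.
  - exact V3.
  - intro z. replace (2 * PI * INR N * z) with (PI * INR N * z + PI * INR N * z) by ring.
    rewrite Cexpi_add. rewrite <- (V3 z) at 2. rewrite <- (V3 z) at 2. ring.
Qed.

Section Rel.
Variable N : nat.
Hypothesis hN : (0 < N)%nat.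
Variable v : gvec.
Variable l : list (R * gvec).
Hypothesis Hd : decomp_ok N l.
Hypothesis Hs : forall x, v x = psum (fun _ => RtoC 1) l x.
Hypothesis V1 : forall z, v (z + 2) = v z.
Hypothesis V3 : forall z, Cmult (Cexpi (PI * INR N * z)) (v z) = v z.
Hypothesis V2 : forall z, Cmult (Cexpi (2 * PI * INR N * z)) (v z) = v z.

Lemma rel1 g z : psum g l (z + 2) = psum g l z.
Proof.
  rewrite <- psum_shl. apply (uniq N). apply shl_ok, Hd. exact Hd.
  intro x. rewrite psum_shl, <- !Hs. apply V1.
Qed.

Lemma rel3 g z : Cmult (Cexpi (2 * PI * INR N * z)) (psum g l z) = psum g l z.
Proof.
  assert (HN : INR N <> 0) by (apply not_0_INR; lia).
  set (K := fun z => Cexpi (2 * PI * INR N * z)).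
  change (Cexpi (2 * PI * INR N * z)) with (K z).
  change (psum g l z) with (psum (fun t => g ((fun t => t) t)) l z) at 1.
  rewrite <- psum_tr. apply (uniq N).
  - apply tr_ok; auto. intros t x _. unfold K.
    replace (2 * PI * INR N * (x + / INR N)) with (2 * PI * INR N * x + 2 * PI * IZR 1) by (simpl; field; exact HN).
    rewrite Cexpi_shift. ring.
  - exact Hd.
  - intro x. rewrite psum_tr. cbv beta. rewrite <- Hs. apply V2.
Qed.

Lemma rel2 z : Cmult (Cexpi (PI * INR N * z)) (psum (ind (fun t => 1/2 <= t < 1)) l z)
               = psum (ind (fun t => 0 <= t < 1/2)) l z.
Proof.
  assert (HN : INR N <> 0) by (apply not_0_INR; lia).
  set (K := fun z => Cexpi (PI * INR N * z)).
  change (Cexpi (PI * INR N * z)) with (K z).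
  rewrite <- (psum_ext (fun t => ind (fun t => 0 <= t < 1/2) (sh t))).
  2:{ unfold decomp_ok in Hd. eapply Forall_impl; [|exact Hd]. intros [t u] [Ht _]. cbn [fst snd].
      rewrite ind_sh by exact Ht. reflexivity. }
  rewrite <- psum_tr. apply (uniq N).
  - apply tr_ok; auto. apply sh_range. intros t x _. unfold K.
    replace (PI * INR N * (x + / INR N)) with (PI * INR N * x + PI) by (field; exact HN).
    rewrite Cexpi_add, Cexpi_PI, ev_sh. ring.
  - exact Hd.
  - intro x. rewrite psum_tr. cbv beta. rewrite <- Hs. apply V3.
Qed.
End Rel.

Theorem mainTheorem3 (N : nat) (hN : (0 < N)%nat) (hEven : Nat.Even N) :
  forall m : Z,
    Xpow N 1 (Fop N (Phi N m)) = Fop N (Phi N m) /\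
    Ypow 1 (Fop N (Phi N m)) = Fop N (Phi N m).
Proof.
  intro m. destruct hEven as [n Hn].
  destruct (v_facts N m hN) as [V1 [V3 V2]].
  unfold Fop. cbv zeta.
  apply (final N n Hn); intro z;
  unfold Bop, Top, spec_proj;
  (destruct (excluded_middle_informative (exists l, is_V_decomp N (Sop (Phi N m)) l)) as [Hex|Hno];
   [ destruct (constructive_indefinite_description _ Hex) as [l Hl]; cbn [proj1_sig]; destruct Hl as [_ [Hd Hs]];
     rewrite ?filter_sum_psum;
     assert (Hs' : forall x, Sop (Phi N m) x = psum (fun _ => RtoC 1) l x)
       by (intro x; rewrite Hs; apply sum_list_psum)
   | ]).
  - apply (rel2 N hN (Sop (Phi N m)) l Hd Hs' V3).
  - ring.
  - apply (rel1 N (Sop (Phi N m)) l Hd Hs' V1).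
  - reflexivity.
  - apply (rel3 N hN (Sop (Phi N m)) l Hd Hs' V2).
  - ring.
Qed.
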